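(* Let $\mu\ge 2$ be an integer and consider a Markov chain $(X_t)_{t\ge0}$ on $\{1,2,\dots,\mu\}$ with transition probabilities $\Pr[X_{t+1}=X_t+1\mid X_t]=X_t(\mu-X_t)/\mu^2$ for $1\le X_t<\mu$, $\Pr[X_{t+1}=X_t-1\mid X_t]=X_t(\mu-X_t)/\mu^2$ for $1<X_t<\mu$, and $X_{t+1}=X_t$ with the remaining probability. Let $T$ be the first hitting time of state $\mu$. Then for all starting states $X_0$, \[ \frac12(\mu-X_0)\mu\ln(\mu-1)\le \mathrm{E}[T\mid X_0]\le 4(\mu-X_0)\mu H_{\lfloor\mu/2\rfloor}\le 4\mu^2\ln\mu. \] In addition, if $n$ is a positive integer with $\mu\le n$, then $\Pr[T\ge 8\mu^2\log^3 n]\le n^{-\log n}$.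
   Context: $H_m=\sum_{k=1}^m 1/k$ denotes the $m$-th harmonic number; $\ln$ is the natural logarithm and $\log$ the binary logarithm. *)

(* Defs.v *)
From HB Require Import structures.
From mathcomp Require Import all_boot all_order all_algebra.
From mathcomp Require Import all_classical all_reals all_analysis.
Set Implicit Arguments. Unset Strict Implicit. Unset Printing Implicit Defensive.
Import Order.TTheory GRing.Theory Num.Theory.
Local Open Scope ring_scope.

Section Chain.
Variable R : realType.

Definition harmonic_num (m : nat) : R := \sum_(1 <= k < m.+1) (k%:R)^-1.

Definition log_2 (x : R) : R := ln x / ln 2.

Definition pup (mu i : nat) : R :=
  if (1 <= i < mu)%N then (i * (mu - i))%:R / (mu ^ 2)%:R else 0.
Definition pdown (mu i : nat) : R :=
  if (1 < i < mu)%N then (i * (mu - i))%:R / (mu ^ 2)%:R else 0.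
Definition ptrans (mu i j : nat) : R :=
  if j == i.+1 then pup mu i
  else if j.+1 == i then pdown mu i
  else if j == i then 1 - pup mu i - pdown mu i
  else 0.

(* killed : q mu x0 t j = Pr[X_t = j and X_s <> mu for all s < t | X_0 = x0]
   i.e. Pr[X_t = j /\ T >= t]. *)
Fixpoint killed (mu x0 t j : nat) : R :=
  match t with
  | 0 => if j == x0 then 1 else 0
  | t'.+1 => \sum_(1 <= i < mu) killed mu x0 t' i * ptrans mu i j
  end.

Definition hit_ge (mu x0 t : nat) : R := \sum_(1 <= j < mu.+1) killed mu x0 t j.

(* Pr[T >= c | X_0 = x0] for a real threshold c (T integer-valued, so
   T >= c iff T >= ceil c; for c <= 0 this is Pr[T >= 0] = 1). *)
Definition hit_ge_real (mu x0 : nat) (c : R) : R :=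
  hit_ge mu x0 `|Num.ceil (Num.max c 0%R)|%N.

(* E[T | X_0 = x0] = sum_{t >= 1} Pr[T >= t], an extended real
   (it is +oo if T = oo with positive probability). *)
Definition hit_time_exp (mu x0 : nat) : \bar R :=
  (\sum_(1 <= t <oo) (hit_ge mu x0 t)%:E)%E.

End Chain.

Arguments harmonic_num R m : clear implicits.
Arguments hit_time_exp R mu x0 : clear implicits.
Arguments hit_ge R mu x0 t : clear implicits.
Arguments hit_ge_real R mu x0 c : clear implicits.
Arguments log_2 R x : clear implicits.

(* Main.v *)
Require Import Defs.
From HB Require Import structures.
From mathcomp Require Import all_boot all_order all_algebra.
From mathcomp Require Import all_classical all_reals all_analysis.
From mathcomp Require Import ring lra zify.
Import Order.TTheory GRing.Theory Num.Theory.
Local Open Scope ring_scope.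

Lemma ind_sum (R : realType) (F : nat -> R) a m n :
  \sum_(m <= k < n) (if k == a then F k else 0) = if (m <= a < n)%N then F a else 0.
Proof. by rewrite -big_mkcond big_nat1_eq. Qed.

Lemma ptransE (R : realType) mu i k : (1 <= i)%N ->
  ptrans R mu i k = (if k == i.+1 then pup R mu i else 0)
     + (if k == i.-1 then pdown R mu i else 0)
     + (if k == i then 1 - pup R mu i - pdown R mu i else 0).
Proof.
move=> i1; rewrite /ptrans.
have E1 : (k.+1 == i) = (k == i.-1) by case: i i1 => // i _; rewrite eqSS.
rewrite E1.
case: (eqVneq k i.+1) => [->|h1].
  by rewrite !ifN ?addr0 //; apply/eqP; lia.
case: (eqVneq k i.-1) => [->|h2].
  by rewrite !ifN ?addr0 ?add0r //; apply/eqP; lia.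
by rewrite !add0r.
Qed.

Lemma sum_ptrans (R : realType) mu i (h : nat -> R) : (1 <= i < mu)%N ->
  \sum_(1 <= k < mu.+1) ptrans R mu i k * h k =
  pup R mu i * h i.+1 + pdown R mu i * h i.-1 + (1 - pup R mu i - pdown R mu i) * h i.
Proof.
move=> /andP[i1 imu].
rewrite (eq_bigr (fun k => (if k == i.+1 then pup R mu i * h k else 0)
     + (if k == i.-1 then pdown R mu i * h k else 0)
     + (if k == i then (1 - pup R mu i - pdown R mu i) * h k else 0))); last first.
  move=> k _; rewrite ptransE // 2!mulrDl.
  by case: ifP => _; case: ifP => _; case: ifP => _; rewrite ?mul0r.
rewrite !big_split /= !ind_sum.
have -> : (1 <= i.+1 < mu.+1)%N by lia.
have -> : (1 <= i < mu.+1)%N by lia.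
case: (ltnP 1 i) => hi.
  by have -> : (1 <= i.-1 < mu.+1)%N by lia.
have -> : (1 <= i.-1 < mu.+1)%N = false by lia.
have -> : pdown R mu i = 0 by rewrite /pdown ifN //; lia.
by rewrite mul0r.
Qed.

Lemma pup_ge0 (R : realType) mu i : 0 <= pup R mu i.
Proof. by rewrite /pup; case: ifP => // _; rewrite divr_ge0 // ler0n. Qed.
Lemma pdown_ge0 (R : realType) mu i : 0 <= pdown R mu i.
Proof. by rewrite /pdown; case: ifP => // _; rewrite divr_ge0 // ler0n. Qed.

Lemma prod_half (R : realType) mu i : (i <= mu)%N ->
  (i * (mu - i))%:R / (mu ^ 2)%:R <= 2^-1 :> R.
Proof.
move=> im.
case: (posnP mu) => [->|mu0].
  by rewrite exp0n // invr0 mulr0 invr_ge0.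
have h : (2 * (i * (mu - i)) <= mu ^ 2)%N by nia.
rewrite ler_pdivrMr ?ltr0n ?expn_gt0 ?mu0 //.
rewrite -(ler_pM2l (x:=2)) ?ltr0n // mulrA mulfV ?pnatr_eq0 // mul1r.
by rewrite -natrM ler_nat.
Qed.

Lemma pup_le (R : realType) mu i : pup R mu i <= 2^-1.
Proof.
rewrite /pup; case: ifP => [/andP[_ h]|_]; last by rewrite invr_ge0.
by apply: prod_half; lia.
Qed.
Lemma pdown_le (R : realType) mu i : pdown R mu i <= 2^-1.
Proof.
rewrite /pdown; case: ifP => [/andP[_ h]|_]; last by rewrite invr_ge0.
by apply: prod_half; lia.
Qed.

Lemma ptrans_ge0 (R : realType) mu i k : 0 <= ptrans R mu i k.
Proof.
rewrite /ptrans; case: ifP => _; first exact: pup_ge0.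
case: ifP => _; first exact: pdown_ge0.
case: ifP => _ //.
have := pup_le R mu i; have := pdown_le R mu i; lra.
Qed.

Lemma killed_ge0 (R : realType) mu x0 t j : 0 <= killed R mu x0 t j.
Proof.
elim: t j => [|t IH] j /=; first by case: ifP.
by apply: sumr_ge0 => i _; rewrite mulr_ge0 // ptrans_ge0.
Qed.

Lemma row_sum (R : realType) mu i : (1 <= i < mu)%N ->
  \sum_(1 <= k < mu.+1) ptrans R mu i k = 1.
Proof.
move=> h; rewrite (eq_bigr (fun k => ptrans R mu i k * (fun _ => 1) k)); last by move=> *; rewrite mulr1.
by rewrite sum_ptrans // !mulr1; ring.
Qed.

Lemma hit_geS (R : realType) mu x0 t :
  hit_ge R mu x0 t.+1 = \sum_(1 <= i < mu) killed R mu x0 t i.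
Proof.
rewrite /hit_ge /= exchange_big /=.
apply: eq_big_nat => i /andP[i1 imu].
by rewrite -mulr_sumr row_sum ?mulr1 ?i1.
Qed.

Lemma hit_ge_Sle (R : realType) mu x0 t : (1 <= mu)%N ->
  hit_ge R mu x0 t.+1 <= hit_ge R mu x0 t.
Proof.
move=> mu1; rewrite hit_geS /hit_ge big_nat_recr //=.
by rewrite lerDl killed_ge0.
Qed.

Lemma hit_ge_mono (R : realType) mu x0 s t : (1 <= mu)%N -> (s <= t)%N ->
  hit_ge R mu x0 t <= hit_ge R mu x0 s.
Proof.
move=> mu1 /subnK <-; elim: (t - s)%N => [|d IH]; first by rewrite add0n.
by rewrite addSn; apply: le_trans IH; apply: hit_ge_Sle.
Qed.

Lemma hit_ge0 (R : realType) mu x0 : (1 <= x0 <= mu)%N -> hit_ge R mu x0 0 = 1.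
Proof.
move=> h; rewrite /hit_ge /=.
rewrite (eq_bigr (fun j => if j == x0 then (fun _ => 1) j else 0)) //.
by rewrite ind_sum; have -> : (1 <= x0 < mu.+1)%N by lia.
Qed.

Lemma hit_ge_ge0 (R : realType) mu x0 t : 0 <= hit_ge R mu x0 t.
Proof. by apply: sumr_ge0 => j _; apply: killed_ge0. Qed.

Definition wt (R : realType) mu k : R := (mu ^ 2)%:R / (k * (mu - k))%:R.
Definition tau (R : realType) mu i : R := \sum_(1 <= k < i.+1) wt R mu k.
Definition gpot (R : realType) mu x : R := \sum_(x <= i < mu) tau R mu i.

Lemma wt_ge0 (R : realType) mu k : 0 <= wt R mu k.
Proof. by rewrite /wt divr_ge0 // ler0n. Qed.
Lemma tau_ge0 (R : realType) mu i : 0 <= tau R mu i.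
Proof. by apply: sumr_ge0 => k _; apply: wt_ge0. Qed.
Lemma gpot_ge0 (R : realType) mu x : 0 <= gpot R mu x.
Proof. by apply: sumr_ge0 => k _; apply: tau_ge0. Qed.

Lemma pup_wt (R : realType) mu i : (1 <= i < mu)%N -> pup R mu i * wt R mu i = 1.
Proof.
move=> h; rewrite /pup /wt h.
have h1 : (i * (mu - i))%:R != 0 :> R by rewrite pnatr_eq0 muln_eq0; apply/negP; lia.
have h2 : (mu ^ 2)%:R != 0 :> R by rewrite pnatr_eq0 expn_eq0; apply/negP; lia.
by rewrite mulrA mulfVK // mulfV.
Qed.

Lemma gpot_harm (R : realType) mu i : (1 <= i < mu)%N ->
  pup R mu i * gpot R mu i.+1 + pdown R mu i * gpot R mu i.-1
  + (1 - pup R mu i - pdown R mu i) * gpot R mu i = gpot R mu i - 1.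
Proof.
move=> /andP[i1 imu].
have gi : gpot R mu i = tau R mu i + gpot R mu i.+1 by rewrite /gpot big_ltn.
have ti : tau R mu i = tau R mu i.-1 + wt R mu i.
  by rewrite /tau big_nat_recr //= prednK.
have pw : pup R mu i * wt R mu i = 1 by apply: pup_wt; rewrite i1 imu.
case: (ltnP 1 i) => hi.
  have gi1 : gpot R mu i.-1 = tau R mu i.-1 + gpot R mu i.
    by rewrite /gpot big_ltn ?prednK //; lia.
  have pd : pdown R mu i = pup R mu i by rewrite /pdown /pup hi imu i1.
  rewrite gi1 pd gi ti; move: pw.
  set p := pup R mu i; set A := gpot R mu i.+1; set B := tau R mu i.-1; set w := wt R mu i.
  move=> pw; rewrite -[in RHS]pw; ring.
have i1' : i = 1%N by lia.
have pd : pdown R mu i = 0 by rewrite /pdown ifN //; lia.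
have t0 : tau R mu i.-1 = 0 by rewrite i1' /tau big_geq.
rewrite pd gi ti t0; move: pw.
set p := pup R mu i; set A := gpot R mu i.+1; set w := wt R mu i.
move=> pw; rewrite -[in RHS]pw; ring.
Qed.

Definition Spot (R : realType) mu x0 t : R :=
  \sum_(1 <= j < mu.+1) killed R mu x0 t j * gpot R mu j.

Lemma gpot_mu (R : realType) mu : gpot R mu mu = 0.
Proof. by rewrite /gpot big_geq. Qed.

Lemma Spot_S (R : realType) mu x0 t : (1 <= mu)%N ->
  Spot R mu x0 t.+1 = Spot R mu x0 t - hit_ge R mu x0 t.+1.
Proof.
move=> mu1; rewrite /Spot /=.
rewrite (eq_bigr (fun j => \sum_(1 <= i < mu) killed R mu x0 t i * (ptrans R mu i j * gpot R mu j))); last first.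
  by move=> j _; rewrite mulr_suml; apply: eq_bigr => i _; rewrite mulrA.
rewrite exchange_big /=.
rewrite (eq_big_nat _ _ (F2 := fun i => killed R mu x0 t i * gpot R mu i - killed R mu x0 t i)); last first.
  move=> i hi; rewrite -mulr_sumr sum_ptrans // gpot_harm //.
  by rewrite mulrBr mulr1.
rewrite sumrB hit_geS big_nat_recr //= gpot_mu mulr0 addr0.
done.
Qed.

Lemma Spot0 (R : realType) mu x0 : (1 <= x0 <= mu)%N -> Spot R mu x0 0 = gpot R mu x0.
Proof.
move=> h; rewrite /Spot /=.
rewrite (eq_bigr (fun j => if j == x0 then gpot R mu j else 0)); last first.
  by move=> j _; case: ifP; rewrite ?mul1r ?mul0r.
by rewrite ind_sum; have -> : (1 <= x0 < mu.+1)%N by lia.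
Qed.

Lemma Spot_ge0 (R : realType) mu x0 t : 0 <= Spot R mu x0 t.
Proof. by apply: sumr_ge0 => j _; rewrite mulr_ge0 ?killed_ge0 ?gpot_ge0. Qed.

Lemma partial_sum (R : realType) mu x0 N : (1 <= x0 <= mu)%N ->
  \sum_(1 <= t < N.+1) hit_ge R mu x0 t = gpot R mu x0 - Spot R mu x0 N.
Proof.
move=> h; have mu1 : (1 <= mu)%N by lia.
elim: N => [|N IH]; first by rewrite big_geq // Spot0 // subrr.
by rewrite big_nat_recr //= IH Spot_S //; ring.
Qed.

Lemma gpot_le1 (R : realType) mu j : (1 <= j)%N -> gpot R mu j <= gpot R mu 1.
Proof.
move=> j1; case: (leqP j mu) => jm; last by rewrite /gpot (big_geq (m:=j)) ?gpot_ge0 //; lia.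
rewrite /gpot (big_cat_nat (n:=j) (m:=1%N)) //= lerDr.
by apply: sumr_ge0 => *; apply: tau_ge0.
Qed.

Lemma Spot_le (R : realType) mu x0 t :
  Spot R mu x0 t <= gpot R mu 1 * hit_ge R mu x0 t.
Proof.
rewrite /Spot /hit_ge mulr_sumr; apply: ler_sum_nat => j /andP[j1 _].
by rewrite mulrC ler_wpM2r ?killed_ge0 ?gpot_le1.
Qed.

Lemma psum_le (R : realType) mu x0 N : (1 <= x0 <= mu)%N ->
  \sum_(1 <= t < N.+1) hit_ge R mu x0 t <= gpot R mu x0.
Proof. by move=> h; rewrite partial_sum // gerBl Spot_ge0. Qed.

Lemma hit_markov (R : realType) mu x0 N : (1 <= x0 <= mu)%N -> (1 <= N)%N ->
  hit_ge R mu x0 N <= gpot R mu x0 / N%:R.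
Proof.
move=> h N1; have mu1 : (1 <= mu)%N by lia.
rewrite ler_pdivlMr ?ltr0n // mulrC.
apply: (le_trans _ (psum_le R mu x0 N h)).
have -> : N%:R * hit_ge R mu x0 N = \sum_(1 <= t < N.+1) hit_ge R mu x0 N.
  by rewrite sumr_const_nat mulr_natl subn1.
apply: ler_sum_nat => t /andP[_ tN]; apply: hit_ge_mono => //; lia.
Qed.

Lemma Emain (R : realType) mu x0 : (1 <= x0 <= mu)%N ->
  hit_time_exp R mu x0 = (gpot R mu x0)%:E.
Proof.
move=> h; have mu1 : (1 <= mu)%N by lia.
have ge0 : forall n, (1 <= n)%N -> true -> (0 <= (hit_ge R mu x0 n)%:E)%E.
  by move=> n _ _; rewrite lee_fin hit_ge_ge0.
apply/eqP; rewrite eq_le; apply/andP; split.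
  apply: lime_le; first exact: (is_cvg_nneseries ge0).
  apply: nearW => n; rewrite sumEFin lee_fin.
  case: n => [|N]; first by rewrite big_geq ?gpot_ge0.
  exact: psum_le.
apply/lee_addgt0Pr => e e0.
set G := gpot R mu 1; set g := gpot R mu x0.
have G0 : 0 <= G by apply: gpot_ge0.
have g0 : 0 <= g by apply: gpot_ge0.
set N := (Num.Def.archi_bound (G * g / e)).+1.
have hN : G * g / e < N%:R.
  apply: lt_le_trans (archi_boundP _) _; first by rewrite divr_ge0 ?mulr_ge0 // ltW.
  by rewrite ler_nat.
have N0 : (0 < N%:R :> R) by rewrite ltr0n.
have key : g - G * g / N%:R <= \sum_(1 <= t < N.+1) hit_ge R mu x0 t.
  rewrite partial_sum // lerD2l lerN2.
  apply: le_trans (Spot_le _ _ _ _) _.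
  by rewrite /G /g -mulrA ler_wpM2l ?gpot_ge0 //; apply: hit_markov.
have key2 : G * g / N%:R <= e.
  rewrite ler_pdivrMr //; rewrite ltr_pdivrMr // in hN.
  by rewrite [e * _]mulrC; apply: ltW.
have := nneseries_lim_ge (N.+1) ge0; rewrite sumEFin => hS.
apply: (@le_trans _ _ ((\sum_(1 <= t < N.+1) hit_ge R mu x0 t)%:E + e%:E)%E).
  rewrite -EFinD lee_fin; lra.
by rewrite leeD2r.
Qed.

Lemma ln_ge1V (R : realType) (x : R) : 0 < x -> 1 - x^-1 <= ln x.
Proof.
move=> x0.
have := @le_ln1Dx R (x^-1 - 1).
rewrite (addrC 1) subrK lnV ?posrE // => h.
have xi : 0 < x^-1 by rewrite invr_gt0.
have : -1 < x^-1 - 1 by lra.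
move/h; lra.
Qed.

Lemma CLh (R : realType) (y : R) : 1 <= y -> 2 * (y - 1) <= (y + 1) * ln y.
Proof.
move=> y1.
pose h : R -> R := ((@id R) + cst 1) * (@ln R) - (cst 2) * ((@id R) - cst 1).
have hE : forall z, h z = (z + 1) * ln z - 2 * (z - 1) by [].
have dh : forall x : R, 0 < x -> is_derive x 1 h (ln x + (x + 1) / x - 2).
  move=> x x0; rewrite /h.
  have := is_derive1_ln x0 => dl.
  apply: is_derive_eq.
  change ((x + 1) * x^-1 + ln x * (1 + 0) - (2 * (1 - 0) + (x - 1) * 0) = ln x + (x + 1) / x - 2).
  ring.
have hder : forall x : R, 0 < x -> 0 <= (h^`())%classic x.
  move=> x x0; have D := dh x x0; rewrite derive1E derive_val.
  have := @ln_ge1V R x x0.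
  have -> : (x + 1) / x = 1 + x^-1 by field; rewrite gt_eqF.
  lra.
have pos : forall x : R, x \in `[1, y] -> 0 < x.
  by move=> x; rewrite in_itv /= => /andP[hx _]; lra.
have posO : forall x : R, x \in `]1, y[ -> 0 < x.
  by move=> x; rewrite in_itv /= => /andP[hx _]; lra.
have := @ger0_derive1_le_cc R h 1 y.
move=> /(_ _ _ _ 1 y) H.
have dv : forall x, 0 < x -> derivable h x 1.
  by move=> x x0; have D := dh x x0; exact: ex_derive.
have := H (fun x hx => dv x (posO x hx))
  (fun x hx => hder x (posO x hx))
  (derivable_within_continuous (fun x hx => dv x (pos x hx))).
move=> hh; have : h 1 <= h y by apply: hh; rewrite ?in_itv /= ?lexx ?y1 ?andbT.
rewrite !hE ln1; lra.
Qed.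


Lemma lnH (R : realType) n : ln ((n.+1)%:R : R) <= harmonic_num R n.
Proof.
elim: n => [|n IH]; first by rewrite ln1 /harmonic_num big_geq.
rewrite /harmonic_num big_nat_recr //= -/(harmonic_num R n).
have n0 : (0 < (n.+1)%:R :> R) by rewrite ltr0n.
have -> : ((n.+2)%:R : R) = (n.+1)%:R * (1 + (n.+1)%:R^-1).
  by rewrite mulrDr mulr1 mulfV ?gt_eqF // natr1.
rewrite lnM ?posrE //.
apply: lerD => //; apply: le_ln1Dx.
by apply: (@lt_trans _ _ 0); [rewrite ltrN10 | rewrite invr_gt0].
Qed.

Lemma Hln (R : realType) m : harmonic_num R m <= ln (((2 * m).+1)%:R : R).
Proof.
elim: m => [|m IH]; first by rewrite ln1 /harmonic_num big_geq.
rewrite /harmonic_num big_nat_recr //= -/(harmonic_num R m).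
set a : R := ((2 * m).+1)%:R in IH *.
have a0 : 0 < a by rewrite ltr0n.
have e1 : (((2 * m.+1).+1)%:R : R) = a * (1 + 2 / a).
  rewrite mulrDr mulr1 mulrCA mulfV ?gt_eqF // mulr1 /a.
  have -> : ((2 * m.+1).+1 = (2 * m).+1 + 2)%N by lia.
  by rewrite natrD.
have hm : (m.+1)%:R = (a + 1) / 2 :> R.
  rewrite /a -[((2 * m).+1)%:R]natr1 natrM -[(m.+1)%:R]natr1.
  by field.
rewrite e1 hm; clearbody a.
have p2 : 0 < 1 + 2 / a.
  have : 0 < 2 / a by rewrite divr_gt0.
  lra.
rewrite lnM ?posrE ?p2 //.
apply: lerD => //.
set y := 1 + 2 / a.
have y1 : 1 <= y by rewrite /y lerDl divr_ge0 // ltW.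
have := @CLh R y y1.
have Lp : 0 <= ln y by apply: ln_ge0.
rewrite invf_div => h.
rewrite ler_pdivrMr; last by lra.
move: h Lp; rewrite /y; set L := ln (1 + 2 / a) => h Lp.
have ta : a * a^-1 = 1 by rewrite mulfV ?gt_eqF.
have ti : 0 < a^-1 by rewrite invr_gt0.
move: h ta ti; rewrite /y; move: (a^-1) => t h ta ti.
nra.
Qed.

Lemma ln2_le (R : realType) : ln (2 : R) <= 5 / 6.
Proof.
have -> : (2 : R) = (1 + 2^-1) * (1 + 3^-1) by field.
rewrite lnM ?posrE //.
have h1 := @le_ln1Dx R 2^-1; have h2 := @le_ln1Dx R 3^-1.
have : ln (1 + 2^-1) <= 2^-1 :> R by apply: h1; lra.
have : ln (1 + 3^-1) <= 3^-1 :> R by apply: h2; lra.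
lra.
Qed.

Lemma wt_geH (R : realType) mu k : (1 <= k < mu)%N -> mu%:R * (k%:R)^-1 <= wt R mu k.
Proof.
move=> /andP[k1 km]; rewrite /wt.
have K0 : 0 < k%:R :> R by rewrite ltr0n.
have D0 : 0 < (mu - k)%:R :> R by rewrite ltr0n subn_gt0.
rewrite natrM natrX ler_pdivlMr ?mulr_gt0 //.
rewrite mulrA divfK ?gt_eqF // natrB; last exact: ltnW.
by rewrite mulrBr expr2 gerBl mulr_ge0 ?ler0n.
Qed.

Lemma tau_geH (R : realType) mu i : (i < mu)%N -> mu%:R * harmonic_num R i <= tau R mu i.
Proof.
move=> im; rewrite /tau /harmonic_num mulr_sumr; apply: ler_sum_nat => k /andP[k1 ki].
apply: wt_geH; lia.
Qed.

Lemma H_ge0 (R : realType) m : 0 <= harmonic_num R m.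
Proof. by apply: sumr_ge0 => k _; rewrite invr_ge0 ler0n. Qed.

Lemma gpot_lower (R : realType) mu x0 : (2 <= mu)%N -> (1 <= x0 <= mu)%N ->
  2^-1 * (mu - x0)%:R * mu%:R * ln ((mu - 1)%:R : R) <= gpot R mu x0.
Proof.
move=> mu2 hx.
have S1 : mu%:R * \sum_(x0 <= i < mu) ln ((i.+1)%:R : R) <= gpot R mu x0.
  rewrite /gpot mulr_sumr; apply: ler_sum_nat => i /andP[_ im].
  apply: (le_trans _ (tau_geH R mu i im)); rewrite ler_wpM2l ?ler0n //; exact: lnH.
have S2 : (mu - x0)%:R * ln (mu%:R : R) <= 2 * \sum_(x0 <= i < mu) ln ((i.+1)%:R : R).
  rewrite mulr2n mulrDl mul1r.
  rewrite [X in _ <= _ + X]big_nat_rev /= -big_split /=.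
  rewrite mulr_natl -sumr_const_nat; apply: ler_sum_nat => i /andP[i1 im].
  rewrite -lnM ?posrE ?ltr0n //.
  have hp : (0 < (i.+1 * (x0 + mu - i.+1).+1))%N by rewrite muln_gt0.
  have hm : (mu <= i.+1 * (x0 + mu - i.+1).+1)%N by nia.
  have m0 : (0 < mu)%N by lia.
  by rewrite -natrM ler_ln ?posrE ?ltr0n ?ler_nat.
have L1 : ln ((mu - 1)%:R : R) <= ln (mu%:R : R).
  rewrite ler_ln ?posrE ?ltr0n ?ler_nat //; lia.
have L0 : 0 <= ln ((mu - 1)%:R : R) by rewrite ln_ge0 // ler1n; lia.
have M0 : 0 <= mu%:R :> R by rewrite ler0n.
have X0 : 0 <= (mu - x0)%:R :> R by rewrite ler0n.
apply: le_trans S1.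
set S := \sum_(_ <= _ < _) _ in S2 *.
set l1 := ln ((mu - 1)%:R : R) in L1 L0 *.
set l2 := ln (mu%:R : R) in S2 L1.
set M := (mu%:R : R) in M0 *.
set X := ((mu - x0)%:R : R) in X0 S2 *.
have h1 : X * l1 <= X * l2 by rewrite ler_wpM2l.
have h2 : X * l1 <= 2 * S by apply: le_trans h1 S2.
have -> : 2^-1 * X * M * l1 = M * (2^-1 * (X * l1)) by ring.
rewrite ler_wpM2l //.
have : 2^-1 * (X * l1) <= 2^-1 * (2 * S) by rewrite ler_wpM2l.
by move=> h; apply: (le_trans h); rewrite mulrA mulVf ?mul1r.
Qed.

Lemma H_mono (R : realType) m n : (m <= n)%N -> harmonic_num R m <= harmonic_num R n.
Proof.
move=> mn; rewrite /harmonic_num (big_cat_nat (n:=m.+1) (m:=1%N) (p:=n.+1)) //= ?lerDl.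
  by apply: sumr_ge0 => k _; rewrite invr_ge0 ler0n.
Qed.

Lemma H_double (R : realType) m : harmonic_num R (2 * m) <= 2 * harmonic_num R m.
Proof.
rewrite /harmonic_num (big_cat_nat (n:=m.+1) (m:=1%N) (p:=(2 * m).+1)) //=; last by lia.
rewrite mulr2n mulrDl mul1r lerD2l.
have -> : (m.+1 = 1 + m)%N by lia.
rewrite big_addn.
have -> : ((2 * m).+1 - m = 1 + m)%N by lia.
apply: ler_sum_nat => k /andP[k1 _].
rewrite lef_pV2 ?posrE ?ltr0n ?ler_nat //; lia.
Qed.

Lemma wt_split (R : realType) mu k : (1 <= k < mu)%N ->
  wt R mu k = mu%:R / k%:R + mu%:R / (mu - k)%:R.
Proof.
move=> /andP[k1 km]; rewrite /wt natrM natrX natrB; last exact: ltnW.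
have K0 : k%:R != 0 :> R by rewrite pnatr_eq0; lia.
have D0 : mu%:R - k%:R != 0 :> R.
  by rewrite subr_eq0 eqr_nat; apply/negP => /eqP h; lia.
by field; rewrite K0 D0.
Qed.

Lemma tau_top (R : realType) mu : (1 <= mu)%N ->
  tau R mu mu.-1 = 2 * mu%:R * harmonic_num R mu.-1.
Proof.
move=> mu1; rewrite /tau /harmonic_num prednK //.
rewrite (eq_big_nat _ _ (F2 := fun k => mu%:R / k%:R + mu%:R / (mu - k)%:R)); last first.
  by move=> k hk; rewrite wt_split.
rewrite big_split /= [X in _ + X = _]big_nat_rev /=.
rewrite (eq_big_nat _ _ (F1 := fun k => mu%:R / (mu - (1 + mu - k.+1))%:R)
  (F2 := fun k => mu%:R / k%:R)); last first.
  by move=> k hk; congr (_ / _%:R); lia.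
by rewrite -mulrA mulr_sumr -mulr2n mulr_natl.
Qed.

Lemma tau_le_top (R : realType) mu i : (i < mu)%N -> tau R mu i <= tau R mu mu.-1.
Proof.
move=> im; rewrite /tau prednK; last by lia.
rewrite (big_cat_nat (n:=i.+1) (m:=1%N) (p:=mu)) /=; [|lia|lia].
by rewrite lerDl; apply: sumr_ge0 => k _; apply: wt_ge0.
Qed.

Lemma gpot_upper (R : realType) mu x0 : (2 <= mu)%N -> (1 <= x0 <= mu)%N ->
  gpot R mu x0 <= 4 * (mu - x0)%:R * mu%:R * harmonic_num R (mu./2).
Proof.
move=> mu2 hx.
have h1 : gpot R mu x0 <= (mu - x0)%:R * tau R mu mu.-1.
  rewrite /gpot mulr_natl -sumr_const_nat; apply: ler_sum_nat => i /andP[_ im].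
  exact: tau_le_top.
apply: le_trans h1 _; rewrite tau_top; last by lia.
have h2 : harmonic_num R mu.-1 <= 2 * harmonic_num R (mu./2).
  apply: le_trans (H_double R (mu./2)); apply: H_mono.
  have := odd_double_half mu; rewrite -muln2; case: (odd mu) => /=; lia.
have X0 : 0 <= (mu - x0)%:R :> R by rewrite ler0n.
have M0 : 0 <= mu%:R :> R by rewrite ler0n.
have -> : 4 * (mu - x0)%:R * mu%:R * harmonic_num R mu./2 =
  (mu - x0)%:R * (2 * mu%:R * (2 * harmonic_num R mu./2)) by ring.
by rewrite ler_wpM2l // ler_wpM2l ?mulr_ge0.
Qed.

Lemma part3 (R : realType) mu x0 : (2 <= mu)%N -> (1 <= x0 <= mu)%N ->
  4 * (mu - x0)%:R * mu%:R * harmonic_num R (mu./2)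
         <= 4 * (mu ^ 2)%:R * ln (mu%:R : R).
Proof.
move=> mu2 hx.
set M : R := mu%:R.
have M2 : 2 <= M by rewrite /M ler_nat.
have M0 : 0 < M by lra.
have Hl : harmonic_num R (mu./2) <= ln (M + 1).
  apply: le_trans (Hln R (mu./2)) _.
  rewrite /M natr1 ler_ln ?posrE ?ltr0n ?ler_nat //.
  have := odd_double_half mu; rewrite -muln2; case: (odd mu) => /=; lia.
have Ll : ln (M + 1) <= ln M + M^-1.
  have -> : M + 1 = M * (1 + M^-1) by rewrite mulrDr mulr1 mulfV ?gt_eqF.
  have Mi : 0 < M^-1 by rewrite invr_gt0.
  rewrite lnM ?posrE //; last by lra.
  rewrite lerD2l; apply: le_ln1Dx; lra.
have M1 : 1 <= M by lra.
have C := @CLh R M M1.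
have L0 : 0 <= ln M by apply: ln_ge0.
have Hm0 := H_ge0 R (mu./2).
have X1 : (mu - x0)%:R <= M - 1 :> R.
  rewrite /M natrB; last by lia.
  have : 1 <= x0%:R :> R by rewrite ler1n; lia.
  lra.
have X0 : 0 <= (mu - x0)%:R :> R by rewrite ler0n.
rewrite natrX -/M.
move: X1 X0 Hl Ll C L0 Hm0.
move: ((mu - x0)%:R : R) (harmonic_num R mu./2) (ln M) => X Hm l X1 X0 Hl Ll C L0 Hm0.
have Mi : M * M^-1 = 1 by rewrite mulfV ?gt_eqF.
have Mi0 : 0 < M^-1 by rewrite invr_gt0.
move: Mi Mi0 Ll; move: (M^-1) => t Mi Mi0 Ll.
have h1 : Hm <= l + t by lra.
have h2 : X * Hm <= (M - 1) * (l + t).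
  apply: le_trans (_ : X * Hm <= X * (l + t)) _; first by rewrite ler_wpM2l.
  rewrite ler_wpM2r //; lra.
have h3 : M - 1 <= M * l by nra.
have h4 : (M - 1) * (l + t) * M <= M * M * l.
  have -> : (M - 1) * (l + t) * M = (M - 1) * M * l + (M - 1) * (M * t) by ring.
  rewrite Mi mulr1; nra.
have -> : 4 * X * M * Hm = 4 * (X * Hm * M) by ring.
have -> : 4 * M ^+ 2 * l = 4 * (M * M * l) by rewrite expr2; ring.
rewrite ler_pM2l; last by lra.
apply: le_trans h4; rewrite ler_wpM2r //; lra.
Qed.

Lemma tri_sum (R : realType) (F : nat -> R) n :
  \sum_(1 <= i < n) \sum_(1 <= k < i.+1) F k = \sum_(1 <= k < n) F k *+ (n - k).
Proof.
elim: n => [|n IH]; first by rewrite !big_geq.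
case: n IH => [|n] IH; first by rewrite !big_geq.
rewrite big_nat_recr //= IH.
rewrite [RHS](eq_big_nat _ _ (F2 := fun k => F k *+ (n.+1 - k) + F k)); last first.
  by move=> k hk; rewrite -mulrSr subSn //; lia.
rewrite big_split /=; congr (_ + _).
by rewrite [RHS]big_nat_recr //= subnn mulr0n addr0.
Qed.

Lemma gpot1 (R : realType) mu : (1 <= mu)%N ->
  gpot R mu 1 = (mu ^ 2)%:R * harmonic_num R mu.-1.
Proof.
move=> mu1; rewrite /gpot /tau tri_sum /harmonic_num prednK // mulr_sumr.
apply: eq_big_nat => k /andP[k1 km].
rewrite -[wt R mu k *+ _]mulr_natl /wt natrM natrB; last exact: ltnW.
have K0 : k%:R != 0 :> R by rewrite pnatr_eq0; lia.
have D0 : mu%:R - k%:R != 0 :> R.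
  by rewrite subr_eq0 eqr_nat; apply/negP => /eqP h; lia.
by field; rewrite K0 D0.
Qed.

Lemma CK (R : realType) mu x0 a b j : (1 <= j <= mu)%N ->
  killed R mu x0 (a + b) j =
  \sum_(1 <= y < mu.+1) killed R mu x0 a y * killed R mu y b j.
Proof.
elim: b j => [|b IH] j hj.
  rewrite addn0 /=.
  rewrite (eq_bigr (fun y => if y == j then killed R mu x0 a y else 0)); last first.
    by move=> y _; rewrite eq_sym; case: ifP; rewrite ?mulr1 ?mulr0.
  by rewrite ind_sum; have -> : (1 <= j < mu.+1)%N by lia.
rewrite addnS /=.
rewrite (eq_big_nat _ _ (F2 := fun i => \sum_(1 <= y < mu.+1)
   killed R mu x0 a y * (killed R mu y b i * ptrans R mu i j))); last first.
  move=> i hi; rewrite IH; last by lia.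
  by rewrite mulr_suml; apply: eq_bigr => y _; rewrite mulrA.
by rewrite exchange_big /=; apply: eq_bigr => y _; rewrite -mulr_sumr.
Qed.

Lemma hit_ge_add (R : realType) mu x0 a b :
  hit_ge R mu x0 (a + b) =
  \sum_(1 <= y < mu.+1) killed R mu x0 a y * hit_ge R mu y b.
Proof.
rewrite /hit_ge (eq_big_nat _ _ (F2 := fun j => \sum_(1 <= y < mu.+1)
   killed R mu x0 a y * killed R mu y b j)); last first.
  by move=> j hj; rewrite CK //; lia.
by rewrite exchange_big /=; apply: eq_bigr => y _; rewrite -mulr_sumr.
Qed.

Lemma hit_ge_mul (R : realType) mu x0 a b (G : R) : (1 <= b)%N ->
  (forall y, (1 <= y <= mu)%N -> gpot R mu y <= G) ->
  hit_ge R mu x0 (a + b) <= hit_ge R mu x0 a * (G / b%:R).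
Proof.
move=> b1 hG; rewrite hit_ge_add /hit_ge mulr_suml.
apply: ler_sum_nat => y /andP[y1 ym].
rewrite ler_wpM2l ?killed_ge0 //.
have hy : (1 <= y <= mu)%N by apply/andP; split; lia.
rewrite -/(hit_ge R mu y b); apply: (le_trans (hit_markov R mu y b hy b1)).
rewrite ler_wpM2r ?invr_ge0 ?ler0n // hG //; lia.
Qed.

Lemma hit_ge_pow (R : realType) mu x0 k L (G : R) : (1 <= x0 <= mu)%N -> (1 <= L)%N ->
  (forall y, (1 <= y <= mu)%N -> gpot R mu y <= G) ->
  hit_ge R mu x0 (k * L) <= (G / L%:R) ^+ k.
Proof.
move=> hx L1 hG; elim: k => [|k IH]; first by rewrite mul0n hit_ge0 ?expr0.
rewrite mulSn addnC exprSr.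
apply: (le_trans (hit_ge_mul R mu x0 (k * L) L G L1 hG)).
have q0 : 0 <= G / L%:R.
  have := hG x0 hx; have := gpot_ge0 R mu x0 => h1 h2.
  by rewrite divr_ge0 ?ler0n //; lra.
by rewrite ler_wpM2r.
Qed.

Lemma pow_le (R : realType) (a b : R) k : 0 <= a -> a <= b -> a ^+ k <= b ^+ k.
Proof.
move=> a0 ab; elim: k => [|k IH]; first by rewrite !expr0.
rewrite !exprS ler_pM // exprn_ge0 //.
Qed.

Lemma tail_arith (R : realType) (k l P lam : R) :
  1 <= l -> 4 <= P -> 0 < lam -> lam <= 5 / 6 -> 0 <= k -> k <= l ^+ 2 + 1 ->
  k * (2 * (P * (lam * (1 + l))) + 1) <= 8 * P * l ^+ 3.
Proof.
move=> l1 P4 lam0 lam56 k0 kl.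
have A0 : 0 <= 2 * (P * (lam * (1 + l))) + 1.
  have : 0 <= P * (lam * (1 + l)) by rewrite mulr_ge0 // ?mulr_ge0 //; lra.
  lra.
have s1 : k * (2 * (P * (lam * (1 + l))) + 1) <= (l ^+ 2 + 1) * (2 * (P * (lam * (1 + l))) + 1).
  by rewrite ler_wpM2r.
apply: le_trans s1 _.
have Pl : 4 <= P * l.
  have : P * 1 <= P * l by rewrite ler_wpM2l //; lra.
  lra.
have s2 : 2 * (P * (lam * (1 + l))) + 1 <= (43 / 12) * (P * l).
  have h1 : lam * (1 + l) <= 5 / 6 * (2 * l) by apply: ler_pM; lra.
  have : P * (lam * (1 + l)) <= P * (5 / 6 * (2 * l)).
    by rewrite ler_wpM2l //; lra.
  have -> : P * (5 / 6 * (2 * l)) = 5 / 3 * (P * l) by field.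
  lra.
have s3 : l ^+ 2 + 1 <= 2 * l ^+ 2.
  have : 1 <= l ^+ 2 by rewrite expr2; have := ler_pM ler01 ler01 l1 l1; rewrite mul1r.
  lra.
have l0 : 0 <= l ^+ 2 by rewrite exprn_ge0 //; lra.
apply: le_trans (ler_pM _ A0 s3 s2) _.
  lra.
have -> : 2 * l ^+ 2 * (43 / 12 * (P * l)) = 43 / 6 * (P * l ^+ 3) by rewrite !exprS expr0; field.
have -> : 8 * P * l ^+ 3 = 8 * (P * l ^+ 3) by ring.
have : 0 <= P * l ^+ 3 by rewrite mulr_ge0 ?exprn_ge0 //; lra.
lra.
Qed.

Lemma absfloor (R : realType) (x : R) : 0 <= x ->
  ((`|Num.floor x|%N)%:R <= x) /\ (x - 1 < (`|Num.floor x|%N)%:R).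
Proof.
move=> x0; rewrite natr_absz ger0_norm; last by rewrite Num.Theory.floor_ge0.
by have := floor_itv x; rewrite intrD => /andP[h1 h2]; split; lra.
Qed.

Lemma absceil (R : realType) (x : R) : 0 <= x ->
  (x <= (`|Num.ceil x|%N)%:R) /\ ((`|Num.ceil x|%N)%:R < x + 1).
Proof.
move=> x0; rewrite natr_absz ger0_norm; last by rewrite ceil_ge0; lra.
by have := ceil_itv x; rewrite intrD => /andP[h1 h2]; split; lra.
Qed.

Lemma tail (R : realType) mu x0 n : (2 <= mu)%N -> (1 <= x0 <= mu)%N -> (0 < n)%N -> (mu <= n)%N ->
  hit_ge_real R mu x0 (8 * (mu ^ 2)%:R * log_2 R n%:R ^+ 3)
    <= (n%:R : R) `^ (- log_2 R n%:R).
Proof.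
move=> mu2 hx n0 mun.
have n2 : (2 <= n)%N by lia.
have mu1 : (1 <= mu)%N by lia.
have hmn : ((2 * mu.-1).+1 <= 2 * n)%N by lia.
set l := log_2 R n%:R.
have ln20 : 0 < ln (2 : R) by apply: ln_gt0; lra.
have N0 : 0 < n%:R :> R by rewrite ltr0n.
have lnn : ln (2 : R) <= ln (n%:R : R).
  by rewrite ler_ln ?posrE ?ltr0n // (ler_nat R 2 n).
have lnE : ln (n%:R : R) = l * ln 2 by rewrite /l /log_2 divfK ?gt_eqF.
have l1 : 1 <= l.
  by rewrite /l /log_2 ler_pdivlMr // mul1r.
set P : R := (mu ^ 2)%:R.
have P4 : 4 <= P.
  have h : (4 <= mu ^ 2)%N by rewrite -mulnn; nia.
  by rewrite -(ler_nat R) in h.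
set c := 8 * P * l ^+ 3.
have l3 : 1 <= l ^+ 3 by rewrite exprn_ege1.
have c0 : 0 < c.
  have : 0 < P * l ^+ 3 by rewrite mulr_gt0 //; lra.
  by rewrite /c -mulrA => h; rewrite mulr_gt0.
rewrite /hit_ge_real max_l; last exact: ltW.
set T := `|Num.ceil c|%N.
have Tc : c <= T%:R.
  rewrite /T natr_absz ger0_norm ?ceil_ge //.
  by rewrite ceil_ge0; lra.
set k := `|Num.ceil (l ^+ 2)|%N.
have l2 : 1 <= l ^+ 2 by rewrite exprn_ege1.
have hk1 : l ^+ 2 <= k%:R.
  rewrite /k natr_absz ger0_norm ?ceil_ge //.
  by rewrite ceil_ge0; lra.
have hk2 : k%:R <= l ^+ 2 + 1.
  rewrite /k natr_absz ger0_norm; last by rewrite ceil_ge0; lra.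
  have := ceil_itv (l ^+ 2); rewrite intrD => /andP[h _]; lra.
have k0 : 0 < k%:R :> R by lra.
set G := P * harmonic_num R mu.-1.
have hG : forall y, (1 <= y <= mu)%N -> gpot R mu y <= G.
  move=> y /andP[y1 _]; apply: le_trans (gpot_le1 R mu y y1) _.
  by rewrite gpot1.
have G0 : 0 <= G by rewrite mulr_ge0 ?ler0n ?H_ge0.
have Gb : G <= P * (ln 2 * (1 + l)).
  rewrite ler_wpM2l ?ler0n //.
  apply: le_trans (Hln R mu.-1) _.
  have -> : ln 2 * (1 + l) = ln ((2 * n)%:R : R).
    by rewrite natrM lnM ?posrE // lnE; ring.
  have h2n : (0 < 2 * n)%N by rewrite muln_gt0 n0.
  rewrite ler_ln ?posrE ?ltr0n ?h2n // ler_nat.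
  exact: hmn.
have ar := @tail_arith R k%:R l P (ln 2) l1 P4 ln20 (ln2_le R) (ltW k0) hk2.
have ar2 : k%:R * (2 * G + 1) <= c.
  apply: le_trans ar; apply: ler_wpM2l; first exact: (ltW k0).
  by rewrite lerD2r; apply: ler_wpM2l.
set L := `|Num.floor (c / k%:R)|%N.
have ck0 : 0 <= c / k%:R by rewrite divr_ge0 //; lra.
have [hL2 hL1] := absfloor R (c / k%:R) ck0.
have GL : 2 * G + 1 <= c / k%:R by rewrite ler_pdivlMr // mulrC.
have L0 : 0 < L%:R :> R by lra.
have L1 : (1 <= L)%N by rewrite -(ltr_nat R) /=.
have kLT : (k * L <= T)%N.
  rewrite -(ler_nat R) natrM; apply: le_trans Tc.
  by rewrite -ler_pdivlMl // mulrC.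
apply: le_trans (hit_ge_mono R mu x0 (k * L) T mu1 kLT) _.
apply: le_trans (hit_ge_pow R mu x0 k L G hx L1 hG) _.
have q0 : 0 <= G / L%:R by rewrite divr_ge0 // ltW.
have q1 : G / L%:R <= 2^-1.
  rewrite ler_pdivrMr //; lra.
apply: le_trans (pow_le R (G / L%:R) 2^-1 k q0 q1) _.
have -> : (2^-1 : R) ^+ k = expR (k%:R * - ln 2).
  by rewrite expRM_natl expRN lnK // posrE.
rewrite /powR gt_eqF // ler_expR lnE.
have : l ^+ 2 * ln 2 <= k%:R * ln 2 by rewrite ler_wpM2r // ltW.
rewrite expr2; lra.
Qed.

Theorem lemma7 (R : realType) (mu x0 : nat) :
  (2 <= mu)%N -> (1 <= x0 <= mu)%N ->
  [/\ ((2^-1 * (mu - x0)%:R * mu%:R * ln ((mu - 1)%:R : R))%R%:E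
         <= hit_time_exp R mu x0)%E,
      (hit_time_exp R mu x0
         <= (4 * (mu - x0)%:R * mu%:R * harmonic_num R (mu./2))%R%:E)%E,
      4 * (mu - x0)%:R * mu%:R * harmonic_num R (mu./2)
         <= 4 * (mu ^ 2)%:R * ln (mu%:R : R)
    & forall n : nat, (0 < n)%N -> (mu <= n)%N ->
        hit_ge_real R mu x0 (8 * (mu ^ 2)%:R * log_2 R n%:R ^+ 3)
          <= (n%:R : R) `^ (- log_2 R n%:R)].
Proof.
move=> mu2 hx.
have E := Emain R mu x0 hx.
split.
- by rewrite E lee_fin; apply: gpot_lower.
- by rewrite E lee_fin; apply: gpot_upper.
- exact: part3.
- by move=> n n0 mun; apply: tail.
Qed.
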